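(* Let $\sigma,\tau,\theta,\eta\in\mathbb{R}$ and $q\in(-1,1]$. Define $\lambda_0=0$ and $\lambda_{n+1}=\frac{1+q\lambda_n}{1-\sigma\tau\lambda_n}$ for $n\ge 0$, and assume that this sequence is well defined (i.e. $1-\sigma\tau\lambda_n\neq 0$ for all $n\ge0$) and that $\lambda_n\neq 0$ for all $n\ge 1$. Let $(\alpha_n)_{n\ge0},(\beta_n)_{n\ge0},(\gamma_n)_{n\ge0},(\delta_n)_{n\ge0},(\varepsilon_n)_{n\ge1},(\varphi_n)_{n\ge1}$ be real sequences satisfying the system (E1)–(E5) described in the context, with initial conditions $\alpha_0=\gamma_0=\delta_0=\varphi_1=0$, $\beta_0=\varepsilon_1=1$, and such that $(\alpha_n,\beta_n)\neq(0,0)$ for all $n\ge0$ and $(\varepsilon_n,\varphi_n)\neq(0,0)$ for all $n\ge1$. Then $\alpha_n=\sigma\lambda_n\beta_n$ for all $n\ge0$ and $\varphi_n=\tau\lambda_{n-1}\varepsilon_n$ for all $n\ge1$.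
   Context: The system (E1)–(E5) is: (E1) for $n\ge0$: $\tau\alpha_n\alpha_{n+1}+q\alpha_n\beta_{n+1}+\sigma\beta_n\beta_{n+1}=\alpha_{n+1}\beta_n$; (E2) for $n\ge2$: $\tau\varepsilon_{n-1}\varepsilon_n+q\varepsilon_n\varphi_{n-1}+\sigma\varphi_n\varphi_{n-1}=\varepsilon_{n-1}\varphi_n$; (E3) for $n\ge0$: $\theta\alpha_n+\eta\beta_n+\tau\alpha_n(\gamma_n+\gamma_{n+1})+\sigma\beta_n(\delta_n+\delta_{n+1})+q(\alpha_n\delta_{n+1}+\beta_n\gamma_n)=\beta_n\gamma_{n+1}+\alpha_n\delta_n$; (E4) for $n\ge1$: $\theta\varepsilon_n+\eta\varphi_n+\tau\varepsilon_n(\gamma_n+\gamma_{n-1})+\sigma\varphi_n(\delta_{n-1}+\delta_n)+q(\varphi_n\gamma_n+\delta_{n-1}\varepsilon_n)=\varepsilon_n\delta_n+\varphi_n\gamma_{n-1}$; (E5) for $n\ge1$: $1+\theta\gamma_n+\eta\delta_n+\tau\gamma_n^2+\sigma\delta_n^2+\tau(\alpha_{n-1}\varepsilon_n+\alpha_n\varepsilon_{n+1})+\sigma(\varphi_n\beta_{n-1}+\beta_n\varphi_{n+1})+q(\gamma_n\delta_n+\beta_{n-1}\varepsilon_n+\alpha_n\varphi_{n+1})=\gamma_n\delta_n+\beta_n\varepsilon_{n+1}+\varphi_n\alpha_{n-1}$. *)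

(* Defs.v *)
From Stdlib Require Import Reals.
Open Scope R_scope.

(* lambda_0 = 0, lambda_{n+1} = (1 + q lambda_n) / (1 - sigma tau lambda_n).
   Division is total in Stdlib; the theorem assumes the denominators are nonzero. *)
Fixpoint lam (sigma tau q : R) (n : nat) : R :=
  match n with
  | O => 0
  | S m => (1 + q * lam sigma tau q m) / (1 - sigma * tau * lam sigma tau q m)
  end.

(* Main.v *)
Require Import Defs.
From Stdlib Require Import Reals Lra Lia.
Open Scope R_scope.

Theorem mainTheorem1
  (sigma tau theta eta q : R)
  (al be ga de ep ph : nat -> R)
  (Hq : -1 < q <= 1)
  (Hwd : forall n : nat, 1 - sigma * tau * lam sigma tau q n <> 0)
  (Hnz : forall n : nat, (1 <= n)%nat -> lam sigma tau q n <> 0)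
  (E1 : forall n : nat,
      tau * al n * al (S n) + q * al n * be (S n) + sigma * be n * be (S n)
      = al (S n) * be n)
  (E2 : forall n : nat, (2 <= n)%nat ->
      tau * ep (n - 1)%nat * ep n + q * ep n * ph (n - 1)%nat
      + sigma * ph n * ph (n - 1)%nat
      = ep (n - 1)%nat * ph n)
  (E3 : forall n : nat,
      theta * al n + eta * be n + tau * al n * (ga n + ga (S n))
      + sigma * be n * (de n + de (S n))
      + q * (al n * de (S n) + be n * ga n)
      = be n * ga (S n) + al n * de n)
  (E4 : forall n : nat, (1 <= n)%nat ->
      theta * ep n + eta * ph n + tau * ep n * (ga n + ga (n - 1)%nat)
      + sigma * ph n * (de (n - 1)%nat + de n)
      + q * (ph n * ga n + de (n - 1)%nat * ep n)
      = ep n * de n + ph n * ga (n - 1)%nat)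
  (E5 : forall n : nat, (1 <= n)%nat ->
      1 + theta * ga n + eta * de n + tau * (ga n) ^ 2 + sigma * (de n) ^ 2
      + tau * (al (n - 1)%nat * ep n + al n * ep (S n))
      + sigma * (ph n * be (n - 1)%nat + be n * ph (S n))
      + q * (ga n * de n + be (n - 1)%nat * ep n + al n * ph (S n))
      = ga n * de n + be n * ep (S n) + ph n * al (n - 1)%nat)
  (I_al : al 0%nat = 0) (I_ga : ga 0%nat = 0) (I_de : de 0%nat = 0)
  (I_ph : ph 1%nat = 0) (I_be : be 0%nat = 1) (I_ep : ep 1%nat = 1)
  (Hab : forall n : nat, al n <> 0 \/ be n <> 0)
  (Hep : forall n : nat, (1 <= n)%nat -> ep n <> 0 \/ ph n <> 0) :
  (forall n : nat, al n = sigma * lam sigma tau q n * be n) /\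
  (forall n : nat, (1 <= n)%nat -> ph n = tau * lam sigma tau q (n - 1)%nat * ep n).
Proof.
  set (L := lam sigma tau q).
  assert (A : forall n, al n = sigma * L n * be n).
  { induction n as [|n IH].
    - unfold L; simpl. rewrite I_al. ring.
    - assert (Hb : be n <> 0).
      { intro Hb0. destruct (Hab n) as [H|H]; apply H; auto.
        rewrite IH, Hb0; ring. }
      pose proof (Hwd n) as Hd. fold L in Hd.
      assert (K : be n * (al (S n) * (1 - sigma * tau * L n)
                   - sigma * be (S n) * (1 + q * L n)) = 0).
      { pose proof (E1 n) as E. rewrite IH in E. lra. }
      apply Rmult_integral in K. destruct K as [K|K]; [contradiction|].
      unfold L at 1; simpl; fold L.
      field_simplify_eq; [lra | exact Hd]. }
  split; [exact A|].
  assert (B : forall m, ph (S m) = tau * L m * ep (S m)).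
  { induction m as [|m IH].
    - unfold L; simpl. rewrite I_ph. ring.
    - assert (He : ep (S m) <> 0).
      { intro He0. destruct (Hep (S m)) as [H|H]; [lia|apply H; auto|apply H].
        rewrite IH, He0; ring. }
      pose proof (Hwd m) as Hd. fold L in Hd.
      pose proof (E2 (S (S m))) as E.
      replace (S (S m) - 1)%nat with (S m) in E by lia.
      specialize (E ltac:(lia)).
      assert (K : ep (S m) * (tau * ep (S (S m)) * (1 + q * L m)
                   - ph (S (S m)) * (1 - sigma * tau * L m)) = 0).
      { rewrite IH in E. lra. }
      apply Rmult_integral in K. destruct K as [K|K]; [contradiction|].
      replace (L (S m)) with ((1 + q * L m) / (1 - sigma * tau * L m))
        by (unfold L; reflexivity).
      field_simplify_eq; [lra | exact Hd]. }
  intros n Hn. destruct n as [|m]; [lia|].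
  replace (S m - 1)%nat with m by lia. apply B.
Qed.
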